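(* Let $g\geq 1$ and $n\geq 1$ be integers. Let the Heisenberg group $H_g$ act on the polynomial ring $\mathbf{C}[\ldots,X_\sigma,\ldots]$ in the $2^g$ variables $X_\sigma$, $\sigma\in\mathbf{F}_2^g$, as described in the context. Then the dimension of the space of $H_g$-invariant homogeneous polynomials of degree $4n$ is $$\dim\big(\mathbf{C}[\ldots,X_\sigma,\ldots]_{4n}\big)^{H_g}=2^{-2g}\left(\binom{2^g+4n-1}{4n}+(2^{2g}-1)\binom{2^{g-1}+2n-1}{2n}\right).$$
   Context: $\mu_4=\{z\in\mathbf{C}: z^4=1\}$. The Heisenberg group is $H_g=\mu_4\times\mathbf{F}_2^g\times\mathbf{F}_2^g$ with multiplication $(s,x,u)(t,y,v)=(st(-1)^{u\cdot y},x+y,u+v)$, where $u\cdot y=\sum_i u_iy_i$. It acts on the variables $X_\sigma$ ($\sigma\in\mathbf{F}_2^g$) by $(s,x,u)X_\sigma=s(-1)^{(x+\sigma)\cdot u}X_{x+\sigma}$, and this action is extended to polynomials as ring automorphisms. $\mathbf{C}[\ldots,X_\sigma,\ldots]_{d}$ denotes the space of homogeneous polynomials of degree $d$. *)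

(* Defs.v *)
From HB Require Import structures.
From mathcomp Require Import all_boot all_order all_algebra all_field.
From mathcomp Require Import mpoly.
Set Implicit Arguments. Unset Strict Implicit. Unset Printing Implicit Defensive.
Import GRing.Theory.
Local Open Scope ring_scope.

(* Field of coefficients: algC (algebraic closure of Q inside C). *)
Definition F2vec (g : nat) := {ffun 'I_g -> 'F_2}.

Definition nvars (g : nat) : nat := #|{: F2vec g}|.

Definition HPoly (g : nat) := {mpoly algC[nvars g]}.

Definition Xs (g : nat) (sigma : F2vec g) : HPoly g := 'X_(enum_rank sigma).

Definition dotF2 (g : nat) (u y : F2vec g) : 'F_2 := \sum_(i < g) u i * y i.

Definition sgnF2 (a : 'F_2) : algC := (-1) ^+ (a : nat).

(* image of X_sigma under (s, x, u) : s (-1)^{(x+sigma).u} X_{x+sigma} *)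
Definition heis_var (g : nat) (s : algC) (x u : F2vec g) (sigma : F2vec g)
  : HPoly g :=
  (s * sgnF2 (dotF2 (x + sigma) u)) *: Xs (x + sigma).

Definition heis_act (g : nat) (s : algC) (x u : F2vec g) (p : HPoly g)
  : HPoly g :=
  p \mPo [tuple heis_var s x u (enum_val i) | i < nvars g].

Definition Hg_invariant (g : nat) (p : HPoly g) : Prop :=
  forall (s : algC) (x u : F2vec g), s ^+ 4 = 1 -> heis_act s x u p = p.

Definition inv_hom (g d : nat) (p : HPoly g) : Prop :=
  p \is d.-homog /\ Hg_invariant p.

Definition lin_indep (g : nat) (B : seq (HPoly g)) : Prop :=
  forall c : 'I_(size B) -> algC,
    \sum_(i < size B) c i *: B`_i = 0 -> forall i, c i = 0.

Definition has_dim (g : nat) (P : HPoly g -> Prop) (N : nat) : Prop :=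
  exists B : seq (HPoly g),
    [/\ size B = N, forall b, b \in B -> P b, lin_indep B &
        forall p, P p -> exists c : 'I_(size B) -> algC,
                          p = \sum_(i < size B) c i *: B`_i].

(* Main.v *)
Set Warnings "-notation-overridden,-ambiguous-paths,-notation-incompatible-prefix,-deprecated".
Require Import Defs.
From HB Require Import structures.
From mathcomp Require Import all_boot all_order all_algebra all_field.
From mathcomp Require Import mpoly.
Set Implicit Arguments. Unset Strict Implicit. Unset Printing Implicit Defensive.
Import GRing.Theory Num.Theory.
Local Open Scope ring_scope.
Lemma F2_add_self (a : 'F_2) : a + a = 0.
Proof. by case: a => [[|[|//]]] ?; apply/val_inj. Qed.

Lemma sgnF2D (a b : 'F_2) : sgnF2 (a + b) = sgnF2 a * sgnF2 b.
Proof.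
rewrite /sgnF2 -exprD.
by case: a => [[|[|//]]] ?; case: b => [[|[|//]]] ? //=; rewrite ?expr0 // expr2 mulrNN mulr1.
Qed.

Lemma sgnF2_0 : sgnF2 0 = 1.
Proof. by rewrite /sgnF2 expr0. Qed.

Lemma sgnF2_sq (a : 'F_2) : sgnF2 a * sgnF2 a = 1.
Proof. by rewrite -sgnF2D F2_add_self sgnF2_0. Qed.

Lemma sgnF2_pm (a : 'F_2) : sgnF2 a = 1 \/ sgnF2 a = -1.
Proof. by case: a => [[|[|//]]] ? /=; rewrite /sgnF2 /= ?expr0 ?expr1; auto. Qed.

Section Basics.
Variable g : nat.
Local Notation V := (F2vec g).

Lemma vaddxx (x : V) : x + x = 0.
Proof. by apply/ffunP => i; rewrite !ffunE F2_add_self. Qed.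

Lemma dotDr (s u v : V) : dotF2 s (u + v) = dotF2 s u + dotF2 s v.
Proof. by rewrite /dotF2 -big_split; apply: eq_bigr => i _; rewrite ffunE mulrDr. Qed.

Lemma dotDl (x s u : V) : dotF2 (x + s) u = dotF2 x u + dotF2 s u.
Proof. by rewrite /dotF2 -big_split; apply: eq_bigr => i _; rewrite ffunE mulrDl. Qed.

Lemma dot0r (s : V) : dotF2 s 0 = 0.
Proof. by rewrite /dotF2 big1 // => i _; rewrite ffunE mulr0. Qed.

Lemma big_shift (R : Type) (idx : R) (op : Monoid.com_law idx) (x : V) (F : V -> R) :
  \big[op/idx]_(s : V) F (x + s) = \big[op/idx]_s F s.
Proof. by rewrite [RHS](reindex_inj (addrI x)). Qed.

End Basics.

Lemma pm_mul (a b : algC) : (a = 1 \/ a = -1) -> (b = 1 \/ b = -1) ->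
  (a * b = 1 \/ a * b = -1).
Proof.
by case=> ->; case=> ->; rewrite ?mulr1 ?mul1r ?mulrN1 ?opprK; auto.
Qed.

Lemma pm_exp (a : algC) n : (a = 1 \/ a = -1) -> (a ^+ n = 1 \/ a ^+ n = -1).
Proof.
move=> Ha; elim: n => [|n IH]; first by left; rewrite expr0.
by rewrite exprS; apply: pm_mul.
Qed.

Section Fun.
Variables g d : nat.
Local Notation V := (F2vec g).
Local Notation F := {ffun V -> 'I_d.+1}.

Definition tr (x : V) (f : F) : F := [ffun s => f (x + s)].
Definition chi (u : V) (f : F) : algC := \prod_(s : V) sgnF2 (dotF2 s u) ^+ f s.
Definition bal (f : F) : bool := [forall u, chi u f == 1].
Definition degf (f : F) : nat := (\sum_(s : V) (f s : nat))%N.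
Definition cf (c : algC) (x u : V) (f : F) : algC :=
  \prod_(s : V) (c * sgnF2 (dotF2 (x + s) u)) ^+ f s.

Lemma trE x f s : tr x f s = f (x + s).
Proof. by rewrite ffunE. Qed.

Lemma tr_comp x y f : tr x (tr y f) = tr (y + x) f.
Proof. by apply/ffunP => s; rewrite !ffunE addrA. Qed.

Lemma tr0 f : tr 0 f = f.
Proof. by apply/ffunP => s; rewrite !ffunE add0r. Qed.

Lemma trK x f : tr x (tr x f) = f.
Proof. by rewrite tr_comp vaddxx tr0. Qed.

Lemma degf_tr x f : degf (tr x f) = degf f.
Proof.
rewrite /degf -[RHS](@big_shift g _ _ _ x) /=.
by apply: eq_bigr => s _; rewrite ffunE.
Qed.

Lemma chiD u v f : chi (u + v) f = chi u f * chi v f.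
Proof.
rewrite /chi -big_split; apply: eq_bigr => s _.
by rewrite dotDr sgnF2D exprMn.
Qed.

Lemma chi_pm u f : chi u f = 1 \/ chi u f = -1.
Proof.
rewrite /chi; elim/big_rec: _ => [|s c _ Hc]; first by left.
apply: pm_mul => //; exact/pm_exp/sgnF2_pm.
Qed.

Lemma chi_sum f : \sum_(u : V) chi u f = if bal f then (#|V|%:R : algC) else 0.
Proof.
case: ifP => [/forallP bf|].
  by rewrite (eq_bigr (fun _ => 1)) ?sumr_const // => u _; apply/eqP/bf.
move/negbT/forallPn => [v Hv0].
have Hv : chi v f = -1 by case: (chi_pm v f) Hv0 => ->; rewrite ?eqxx.
apply/eqP.
have: \sum_(u : V) chi u f = - \sum_(u : V) chi u f.
  rewrite -[LHS](@big_shift g _ _ _ v) /= -sumrN; apply: eq_bigr => u _.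
  by rewrite chiD Hv mulN1r.
move/eqP; rewrite -subr_eq0 opprK -mulr2n -mulr_natr mulf_eq0 pnatr_eq0 orbF.
by [].
Qed.

Lemma chi_tr u y f : chi u (tr y f) = sgnF2 (dotF2 y u) ^+ degf f * chi u f.
Proof.
rewrite /chi /degf -prodrXr -big_split /=.
rewrite -[LHS](@big_shift g _ _ _ y) /=; apply: eq_bigr => s _.
by rewrite ffunE addrA vaddxx add0r dotDl sgnF2D exprMn.
Qed.

Lemma sgn_even (a : 'F_2) m : ~~ odd m -> sgnF2 a ^+ m = 1.
Proof.
move=> ev; rewrite -(odd_double_half m) (negbTE ev) add0n -muln2 mulnC exprM.
by rewrite expr2 sgnF2_sq expr1n.
Qed.

Lemma bal_tr y f : ~~ odd (degf f) -> bal (tr y f) = bal f.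
Proof.
move=> ev; apply/forallP/forallP => H u; move: (H u); rewrite chi_tr sgn_even ?mul1r //.
Qed.

End Fun.

Section Mon.
Variables g d : nat.
Local Notation V := (F2vec g).
Local Notation F := {ffun V -> 'I_d.+1}.

Definition mon (f : F) : 'X_{1..nvars g} := [multinom (f (enum_val i) : nat) | i < nvars g].
Definition Xf (f : F) : HPoly g := 'X_[mon f].

Lemma prod_enum (R : comNzRingType) (G : V -> R) :
  \prod_(i < nvars g) G (enum_val i) = \prod_(s : V) G s.
Proof. by rewrite [RHS]big_enum_val. Qed.

Lemma sum_enum (G : V -> nat) :
  (\sum_(i < nvars g) G (enum_val i) = \sum_(s : V) G s)%N.
Proof. by rewrite [RHS]big_enum_val. Qed.

Lemma mdeg_mon f : mdeg (mon f) = degf f.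
Proof. by rewrite mdegE /degf -sum_enum; apply: eq_bigr => i _; rewrite mnmE. Qed.

Lemma mon_inj : injective mon.
Proof.
move=> f1 f2 /mnmP H; apply/ffunP => s; apply/val_inj.
by move: (H (enum_rank s)); rewrite !mnmE enum_rankK.
Qed.

Lemma mon_surj (m : 'X_{1..nvars g}) : mdeg m = d -> exists f, m = mon f.
Proof.
move=> Hm; exists [ffun s => inord (m (enum_rank s))]; apply/mnmP => i.
rewrite mnmE ffunE enum_valK inordK // ltnS -Hm mdegE.
by rewrite (bigD1 i) //= leq_addr.
Qed.

Lemma XfE f : Xf f = \prod_(s : V) Xs s ^+ f s.
Proof.
rewrite /Xf mpolyXE_id -prod_enum; apply: eq_bigr => i _.
by rewrite mnmE /Xs enum_valK.
Qed.

Lemma act_X c x u f : heis_act c x u (Xf f) = cf c x u f *: Xf (tr x f).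
Proof.
rewrite /heis_act /Xf comp_mpolyX.
under eq_bigr => i _ do rewrite tnth_mktuple mnmE.
rewrite (prod_enum (fun s => heis_var c x u s ^+ f s)).
rewrite -/(Xf (tr x f)) XfE /heis_var.
under eq_bigr => s _ do rewrite exprZn.
rewrite scaler_prod; congr (_ *: _).
rewrite -[LHS](@big_shift g _ _ _ x) /=; apply: eq_bigr => s _.
by rewrite addrA vaddxx add0r ffunE.
Qed.

End Mon.

Section Homog.
Variables g d : nat.
Local Notation V := (F2vec g).
Local Notation F := {ffun V -> 'I_d.+1}.

Lemma coef_Xf (f : F) m : (Xf f)@_m = (mon f == m)%:R.
Proof. exact: mcoeffX. Qed.

Lemma homog_dec (p : HPoly g) : p \is d.-homog ->
  p = \sum_(f : F | degf f == d) p@_(mon f) *: Xf f.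
Proof.
move=> Hp; apply/mpolyP => m; rewrite raddf_sum /=.
under eq_bigr => f _ do rewrite mcoeffZ coef_Xf.
case: (boolP (mdeg m == d)) => [/eqP Hm|Hm].
  have [f0 Hf0] := mon_surj Hm.
  have Hd0 : degf f0 == d by rewrite -mdeg_mon -Hf0 Hm.
  rewrite (bigD1 f0) //= Hf0 eqxx mulr1 big1 ?addr0 // => f /andP[_ Hf].
  by rewrite (inj_eq (@mon_inj _ _)) (negbTE Hf) mulr0.
rewrite (dhomog_nemf_coeff Hp Hm) big1 // => f /eqP Hf.
case: eqP => [Hmf|]; last by rewrite mulr0.
by move: Hm; rewrite -Hmf mdeg_mon Hf eqxx.
Qed.

Lemma act_homog (p : HPoly g) c x u : p \is d.-homog ->
  heis_act c x u p = \sum_(f : F | degf f == d) (p@_(mon f) * cf c x u f) *: Xf (tr x f).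
Proof.
move=> Hp; rewrite {1}(homog_dec Hp) /heis_act raddf_sum /=.
apply: eq_bigr => f _; rewrite comp_mpolyZ -/(heis_act _ _ _ _) act_X scalerA.
by [].
Qed.

Lemma act_coef (p : HPoly g) c x u (f' : F) : p \is d.-homog -> degf f' = d ->
  (heis_act c x u p)@_(mon f') = cf c x u (tr x f') * p@_(mon (tr x f')).
Proof.
move=> Hp Hf'; rewrite (act_homog _ _ _ Hp) raddf_sum /=.
under eq_bigr => f _ do rewrite mcoeffZ coef_Xf.
rewrite (bigD1 (tr x f')) /=; last by rewrite degf_tr Hf'.
rewrite trK eqxx mulr1 big1 ?addr0; first exact: mulrC.
move=> f /andP[_ Hf].
case: eqP => [/mon_inj Hmf|]; last by rewrite mulr0.
by move: Hf; rewrite -Hmf trK eqxx.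
Qed.

Lemma cf_10 x (f : F) : cf 1 x 0 f = 1.
Proof. by rewrite /cf big1 // => s _; rewrite dot0r sgnF2_0 mulr1 expr1n. Qed.

Lemma cf_chi u (f : F) : cf 1 0 u f = chi u f.
Proof. by rewrite /cf; apply: eq_bigr => s _; rewrite mul1r add0r. Qed.

Lemma inv_tr (p : HPoly g) x (f : F) : p \is d.-homog -> Hg_invariant p ->
  degf f = d -> p@_(mon (tr x f)) = p@_(mon f).
Proof.
move=> Hp Hi Hf; have := Hi 1 x 0 (expr1n _ _).
by move=> /(congr1 (mcoeff (mon f))); rewrite act_coef // cf_10 mul1r.
Qed.

Lemma inv_bal (p : HPoly g) (f : F) : p \is d.-homog -> Hg_invariant p ->
  degf f = d -> ~~ bal f -> p@_(mon f) = 0.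
Proof.
move=> Hp Hi Hf /forallPn [u Hu].
have Hc : chi u f = -1 by case: (chi_pm u f) Hu => ->; rewrite ?eqxx.
have := Hi 1 0 u (expr1n _ _).
move=> /(congr1 (mcoeff (mon f))); rewrite act_coef // cf_chi tr0 Hc mulN1r.
move/eqP; rewrite eq_sym -subr_eq0 opprK -mulr2n -mulr_natl mulf_eq0 pnatr_eq0 /=.
by move/eqP.
Qed.

Definition esum (r : F) : HPoly g := \sum_(y : V) Xf (tr y r).

Lemma cf_one c x u (f : F) n : c ^+ 4 = 1 -> degf f = (4 * n)%N -> bal f ->
  cf c x u f = 1.
Proof.
move=> Hc Hf Hb.
rewrite /cf; under eq_bigr => s _ do rewrite dotDl sgnF2D mulrA exprMn.
rewrite big_split /= -/(chi u f) (eqP (forallP Hb u)) mulr1 prodrXr -/(degf f) Hf.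
have H4 : (c * sgnF2 (dotF2 x u)) ^+ 4 = 1.
  by rewrite exprMn Hc mul1r sgn_even.
by rewrite exprM H4 expr1n.
Qed.

Lemma esum_inv (r : F) n c x u : c ^+ 4 = 1 -> d = (4 * n)%N -> degf r = d -> bal r ->
  heis_act c x u (esum r) = esum r.
Proof.
move=> Hc Hd Hr Hb.
have HA y : heis_act c x u (Xf (tr y r)) = Xf (tr (x + y) r).
  rewrite act_X tr_comp (addrC y) (@cf_one c x u _ n) ?scale1r //.
    by rewrite degf_tr Hr Hd.
  by rewrite bal_tr // Hr Hd oddM.
rewrite /heis_act in HA; rewrite /esum /heis_act raddf_sum /=.
rewrite (eq_bigr _ (fun y _ => HA y)).
exact: (@big_shift g _ _ _ x (fun y => Xf (tr y r))).
Qed.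

End Homog.

Section Orb.
Variables g d : nat.
Local Notation V := (F2vec g).
Local Notation F := {ffun V -> 'I_d.+1}.

Definition key (f : F) : nat := enum_rank f.
Definition minf (f : F) : bool := [forall y : V, (key f <= key (tr y f))%N].
Definition zmin (f : F) : V := [arg min_(y < (0 : V)) key (tr y f)].
Definition rep (f : F) : F := tr (zmin f) f.
Definition stab (f : F) : nat := (\sum_(y : V) (tr y f == f))%N.
Definition orbc (r f : F) : nat := (\sum_(y : V) (tr y r == f))%N.

Lemma rep_min f : minf (rep f).
Proof.
rewrite /minf /rep /zmin; case: arg_minnP => // z _ Hz.
by apply/forallP => y; rewrite tr_comp; apply: Hz.
Qed.

Lemma key_inj : injective key.
Proof. by move=> f1 f2 /val_inj /enum_rank_inj. Qed.

Lemma min_uniq r r' y : minf r -> minf r' -> r' = tr y r -> r = r'.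
Proof.
move=> /forallP Hr /forallP Hr' E; apply: key_inj; apply/eqP; rewrite eqn_leq.
have := Hr y; rewrite -E => -> /=.
by have := Hr' y; rewrite E trK.
Qed.

Lemma rep_tr y f : rep (tr y f) = rep f.
Proof.
apply/esym/(@min_uniq _ _ (zmin f + (y + zmin (tr y f)))); rewrite ?rep_min //.
by rewrite /rep !tr_comp [in RHS]addrA vaddxx add0r.
Qed.

Lemma rep_id r : minf r -> rep r = r.
Proof. by move=> Hr; apply/esym/(@min_uniq r (rep r) (zmin r)); rewrite ?rep_min. Qed.

Lemma rep_eq r y : minf r -> rep (tr y r) = r.
Proof. by move=> Hr; rewrite rep_tr rep_id. Qed.

Lemma rep_orb f : exists z, f = tr z (rep f).
Proof. by exists (zmin f); rewrite /rep trK. Qed.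

Lemma tr_inj (y : V) : injective (@tr g d y).
Proof. exact: (can_inj (trK y)). Qed.

Lemma stab_tr z r : stab (tr z r) = stab r.
Proof.
rewrite /stab; apply: eq_bigr => y _.
by rewrite -[in RHS](inj_eq (can_inj (@trK g d z))) !tr_comp addrC.
Qed.

Lemma orbc_tr z r : orbc r (tr z r) = stab r.
Proof.
rewrite /orbc /stab -[RHS](@big_shift g _ _ _ z) /=; apply: eq_bigr => y _.
by rewrite -(inj_eq (can_inj (@trK g d z))) trK tr_comp addrC.
Qed.

Lemma orbc0 r f : minf r -> rep f != r -> orbc r f = 0%N.
Proof.
move=> Hr Hf; rewrite /orbc big1 // => y _; apply/eqP; rewrite eqb0.
by apply/eqP => E; move: Hf; rewrite -E rep_eq // eqxx.
Qed.

Lemma orbc_sum r : (\sum_(f : F) orbc r f = #|V|)%N.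
Proof.
rewrite /orbc exchange_big /= -sum1_card; apply: eq_bigr => y _.
by rewrite (bigD1 (tr y r)) //= eqxx big1 // => f /negbTE; rewrite eq_sym => ->.
Qed.

Lemma stab_pos f : (0 < stab f)%N.
Proof. by rewrite /stab (bigD1 (0 : V)) //= tr0 eqxx. Qed.

End Orb.

Section Basis.
Variables g n : nat.
Local Notation d := (4 * n)%N.
Local Notation V := (F2vec g).
Local Notation F := {ffun V -> 'I_d.+1}.

Definition Rset : pred F := [pred f : F | (degf f == d) && bal f && minf f].
Definition Rseq : seq F := enum Rset.
Definition r0 : F := [ffun=> ord0].

Lemma coef_esum_gen (r : F) m : (esum r)@_m = \sum_(y : V) (mon (tr y r) == m)%:R.
Proof. by rewrite /esum raddf_sum /=; apply: eq_bigr => y _; rewrite coef_Xf. Qed.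

Lemma coef_esum (r f : F) : (esum r)@_(mon f) = (orbc r f)%:R.
Proof.
rewrite coef_esum_gen /orbc natr_sum; apply: eq_bigr => y _.
by rewrite (inj_eq (@mon_inj _ _)).
Qed.

Lemma esum_homog (r : F) : degf r = d -> esum r \is d.-homog.
Proof.
move=> Hr; rewrite /esum rpred_sum // => y _.
rewrite /Xf dhomogX; apply/eqP; exact: (etrans (mdeg_mon (tr y r)) (etrans (degf_tr y r) Hr)).
Qed.

Lemma Rset_rep (f : F) : degf f = d -> bal f -> rep f \in Rset.
Proof.
move=> Hf Hb; rewrite inE rep_min andbT /rep degf_tr Hf eqxx bal_tr ?Hf ?oddM //.
Qed.

Lemma Rset_min (r : F) : r \in Rset -> minf r.
Proof. by rewrite inE => /andP[]. Qed.

Lemma Rset_deg (r : F) : r \in Rset -> degf r = d.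
Proof. by rewrite inE => /andP[/andP[/eqP]]. Qed.

Lemma Rset_bal (r : F) : r \in Rset -> bal r.
Proof. by rewrite inE => /andP[/andP[]]. Qed.

Lemma orbc_self (r : F) : orbc r r = stab r.
Proof. by rewrite -{2}(tr0 r) orbc_tr. Qed.

Lemma stab_neq0 (r : F) : (stab r)%:R != 0 :> algC.
Proof. by rewrite pnatr_eq0 -lt0n stab_pos. Qed.

Lemma nthR_in (i : nat) : (i < size Rseq)%N -> nth r0 Rseq i \in Rset.
Proof. by move=> Hi; rewrite -mem_enum; apply: mem_nth. Qed.

Lemma has_dim_R : has_dim (@inv_hom g d) (size Rseq).
Proof.
exists [seq esum r | r <- Rseq]; split.
- by rewrite size_map.
- move=> b /mapP [r Hr ->]; rewrite mem_enum in Hr.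
  split; first exact/esum_homog/Rset_deg.
  move=> c x u Hc.
  exact: (@esum_inv g (4 * n) r n c x u Hc erefl (Rset_deg Hr) (Rset_bal Hr)).
- move=> c H i.
  have Hi : (i < size Rseq)%N by rewrite -(size_map (@esum g (4 * n))); exact: ltn_ord i.
  have := congr1 (mcoeff (mon (nth r0 Rseq i))) H; rewrite raddf_sum mcoeff0 /=.
  rewrite (bigD1 i) //= big1 ?addr0.
    rewrite mcoeffZ (nth_map r0) // coef_esum orbc_self => /eqP.
    by rewrite mulf_eq0 (negbTE (stab_neq0 _)) orbF => /eqP.
  move=> j Hj; have Hj' : (j < size Rseq)%N by rewrite -(size_map (@esum g (4 * n))); exact: ltn_ord j.
  rewrite mcoeffZ (nth_map r0) // coef_esum orbc0 ?mulr0 //.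
    exact/Rset_min/nthR_in.
  rewrite rep_id; last exact/Rset_min/nthR_in.
  by rewrite nth_uniq ?enum_uniq // eq_sym.
- move=> p [Hp Hi]; rewrite size_map.
  exists (fun i : 'I_(size Rseq) => p@_(mon (nth r0 Rseq i)) / (stab (nth r0 Rseq i))%:R).
  transitivity (\sum_(r <- Rseq) (p@_(mon r) / (stab r)%:R) *: esum r); last first.
    rewrite (big_nth r0) big_mkord; apply: eq_bigr => i _; by rewrite (nth_map r0).
  rewrite /Rseq big_enum /=.
  apply/mpolyP => m; rewrite raddf_sum /=.
  under eq_bigr => r _ do rewrite mcoeffZ.
  case: (boolP (mdeg m == d)) => [/eqP Hm | Hm]; last first.
    rewrite (dhomog_nemf_coeff Hp Hm) big1 // => r Hr.
    rewrite coef_esum_gen big1 ?mulr0 // => y _.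
    case: eqP => // E; move: Hm; rewrite -E.
    by rewrite (etrans (mdeg_mon (tr y r)) (etrans (degf_tr y r) (Rset_deg Hr))) eqxx.
  have [f Ef] := mon_surj Hm; subst m.
  have Hf : degf f = d by rewrite -mdeg_mon.
  under eq_bigr => r _ do rewrite coef_esum.
  case: (boolP (bal f)) => Hb.
    rewrite (bigD1 (rep f)) ?Rset_rep //= big1 ?addr0.
      have [z Ez] := rep_orb f.
      rewrite [X in orbc _ X]Ez orbc_tr divfK ?stab_neq0 //.
      by rewrite /rep (inv_tr _ Hp Hi Hf).
    move=> r /andP[Hr Hne]; rewrite orbc0 ?mulr0 //; first exact: Rset_min.
    by rewrite eq_sym.
  rewrite (inv_bal Hp Hi Hf Hb) big1 // => r Hr; rewrite orbc0 ?mulr0 //.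
    exact: Rset_min.
  apply/eqP => E; move: (Rset_bal Hr); rewrite -E /rep bal_tr ?Hf ?oddM //.
  by rewrite (negbTE Hb).
Qed.

End Basis.

Section GF.

Lemma prod_scaleX (I : finType) (w : I -> algC) (e : I -> nat) :
  \prod_(i : I) (w i *: ('X^(e i) : {poly algC})) = (\prod_i w i) *: 'X^(\sum_i e i).
Proof.
under eq_bigr => i _ do rewrite -mul_polyC.
by rewrite big_split /= -rmorph_prod prodrXr mul_polyC.
Qed.

Lemma GF (I : finType) (D a c : nat) (W : I -> nat -> algC) :
  (\prod_(i : I) \sum_(j < D.+1) (W i j *: 'X^(a * j)))`_c =
  \sum_(f : {ffun I -> 'I_D.+1} | (a * \sum_i (f i : nat) == c)%N) \prod_i W i (f i).
Proof.
rewrite bigA_distr_bigA /= coef_sum [RHS]big_mkcond /=; apply: eq_bigr => f _.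
rewrite prod_scaleX coefZ coefXn -big_distrr /=.
by case: eqP => [->|]; rewrite ?eqxx ?mulr1 ?mulr0 //; case: eqP => // ->.
Qed.

Definition Sp (D : nat) : {poly algC} := \sum_(j < D.+1) 'X^j.

Lemma coef_Sp D c : (Sp D)`_c = if (c <= D)%N then 1 else 0.
Proof.
rewrite /Sp coef_sum; case: leqP => Hc.
  rewrite (bigD1 (Ordinal (leq_ltn_trans Hc (ltnSn D)))) //= coefXn eqxx big1 ?addr0 //.
  move=> j /eqP Hj; rewrite coefXn; case: eqP => // Ej; case: Hj; apply/val_inj.
  by rewrite /= Ej.
rewrite big1 // => j _; rewrite coefXn; case: eqP => // Ej.
by move: (ltn_ord j); rewrite -Ej ltnS leqNgt Hc.
Qed.

Lemma hockey k c : (\sum_(j < c.+1) 'C(k + j, j) = 'C(k.+1 + c, c))%N.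
Proof.
elim: c => [|c IH]; first by rewrite big_ord1 !addn0 !bin0.
by rewrite big_ord_recr /= IH !addSn !addnS binS addnC.
Qed.

Lemma coef_Sp_exp D k c : (c <= D)%N -> (Sp D ^+ k.+1)`_c = ('C(k + c, c))%:R.
Proof.
elim: k c => [|k IH] c Hc; first by rewrite expr1 coef_Sp Hc add0n binn.
rewrite exprSr coefM (eq_bigr (fun j : 'I_c.+1 => ('C(k + j, j))%:R)).
  by rewrite -natr_sum hockey.
move=> j _; rewrite IH; last by apply: leq_trans Hc; rewrite -ltnS.
by rewrite coef_Sp (leq_trans (leq_subr _ _) Hc) mulr1.
Qed.

Definition Sw (D : nat) (w : algC) : {poly algC} := \sum_(j < D.+1) (w ^+ j) *: 'X^(1 * j).
Definition Q2 (D : nat) : {poly algC} := \sum_(j < D.+1) (1 : algC) *: 'X^(2 * j).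

Lemma coef_Sw D w c : (Sw D w)`_c = if (c <= D)%N then w ^+ c else 0.
Proof.
rewrite /Sw coef_sum; case: leqP => Hc.
  rewrite (bigD1 (Ordinal (leq_ltn_trans Hc (ltnSn D)))) //= coefZ mul1n coefXn eqxx mulr1.
  rewrite big1 ?addr0 //.
  move=> j /eqP Hj; rewrite coefZ mul1n coefXn; case: eqP => Ej; last by rewrite mulr0.
  by case: Hj; apply/val_inj; rewrite /= Ej.
rewrite big1 // => j _; rewrite coefZ mul1n coefXn; case: eqP => Ej; last by rewrite mulr0.
by move: (ltn_ord j); rewrite -Ej ltnS leqNgt Hc.
Qed.

Lemma Sw1 D : Sw D 1 = Sp D.
Proof. by rewrite /Sw /Sp; apply: eq_bigr => j _; rewrite expr1n scale1r mul1n. Qed.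

Lemma coef_Q2 D c : (c <= D)%N -> (Q2 D)`_c = if odd c then 0 else 1.
Proof.
move=> Hc; rewrite /Q2 coef_sum.
case: ifP => Ho.
  rewrite big1 // => j _; rewrite coefZ coefXn; case: eqP => Ej; last by rewrite mulr0.
  by move: Ho; rewrite Ej oddM.
have Hlt : (c./2 < D.+1)%N by rewrite ltnS (leq_trans _ Hc) // leq_half_double -addnn leqW // leq_addr.
rewrite (bigD1 (Ordinal Hlt)) //= coefZ coefXn.
have Ec : c = (2 * c./2)%N by rewrite -{1}(odd_double_half c) Ho add0n -muln2 mulnC.
rewrite [c == _](_ : _ = true); last by apply/eqP.
rewrite mulr1 big1 ?addr0 // => j /eqP Hj; rewrite coefZ coefXn.
case: eqP => Ej; last by rewrite mulr0.
case: Hj; apply/val_inj => /=; move/eqP: Ej; rewrite {1}Ec eqn_mul2l /= => /eqP ->.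
by [].
Qed.

Lemma alt_sum c : \sum_(j < c.+1) (-1 : algC) ^+ j = if odd c then 0 else 1.
Proof.
elim: c => [|c IH]; first by rewrite big_ord1 expr0.
rewrite big_ord_recr /= IH -signr_odd /=.
by case: (odd c); rewrite /= ?expr0 ?expr1 ?add0r ?addrN.
Qed.

Lemma coef_SS D c : (c <= D)%N -> (Sw D (-1) * Sw D 1)`_c = if odd c then 0 else 1.
Proof.
move=> Hc; rewrite coefM -alt_sum; apply: eq_bigr => j _.
rewrite !coef_Sw expr1n (leq_trans (leq_subr _ _) Hc) mulr1.
by rewrite (leq_trans _ Hc) // -ltnS.
Qed.

Lemma coef_eq_mul (p q p' q' : {poly algC}) e :
  (forall j, (j <= e)%N -> p`_j = p'`_j) -> (forall j, (j <= e)%N -> q`_j = q'`_j) ->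
  forall j, (j <= e)%N -> (p * q)`_j = (p' * q')`_j.
Proof.
move=> Hp Hq j Hj; rewrite !coefM; apply: eq_bigr => i _.
have Hi : (i <= e)%N by apply: leq_trans Hj; rewrite -ltnS.
by rewrite Hp // Hq // (leq_trans (leq_subr _ _) Hj).
Qed.

Lemma coef_eq_exp (p q : {poly algC}) e k :
  (forall j, (j <= e)%N -> p`_j = q`_j) -> forall j, (j <= e)%N -> (p ^+ k)`_j = (q ^+ k)`_j.
Proof.
move=> H; elim: k => [|k IH] j Hj; first by rewrite !expr0.
rewrite !exprS; apply: (coef_eq_mul (e := e)) Hj; [exact: H | move=> i Hi; exact: IH].
Qed.

End GF.

Lemma F2_neq0 (a : 'F_2) : a != 0 -> a = 1.
Proof. by case: a => [[|[|//]]] ? //= _; apply/val_inj. Qed.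

Lemma F2_1add (a : 'F_2) : (1 + a == 0) = (a != 0).
Proof. by case: a => [[|[|//]]] ?; apply/idP/idP => //=. Qed.

Lemma sgnF2_1 : sgnF2 1 = -1.
Proof. by rewrite /sgnF2 expr1. Qed.

Section Pair.
Variable g : nat.
Local Notation V := (F2vec g).

Lemma pair_big (R : Type) (idx : R) (op : Monoid.com_law idx) (y : V) (j0 : 'I_g)
  (G : V -> R) : y j0 = 1 ->
  \big[op/idx]_(s : V) G s = \big[op/idx]_(s : V | s j0 == 0) op (G s) (G (y + s)).
Proof.
move=> Hy; rewrite (bigID (fun s : V => s j0 == 0)) /= big_split /=; congr (op _ _).
rewrite (reindex_inj (addrI y)) /=; apply: eq_bigl => s.
by rewrite ffunE Hy F2_1add negbK.
Qed.

Definition ev (j0 : 'I_g) : V := [ffun i => (i == j0)%:R].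

Lemma ev_j0 j0 : ev j0 j0 = 1.
Proof. by rewrite ffunE eqxx. Qed.

Lemma dot_ev j0 u : dotF2 (ev j0) u = u j0.
Proof.
rewrite /dotF2 (bigD1 j0) //= ev_j0 mul1r big1 ?addr0 // => i /negbTE Hi.
by rewrite ffunE Hi mul0r.
Qed.

Lemma card_V : #|V| = (2 ^ g)%N.
Proof. by rewrite card_ffun card_Fp // card_ord. Qed.

Lemma card_half (j0 : 'I_g) : #|[pred s : V | s j0 == 0%R]| = (2 ^ g.-1)%N.
Proof.
have H : #|V| = (2 * #|[pred s : V | s j0 == 0%R]|)%N.
  rewrite -!sum1_card (pair_big _ _ (ev_j0 j0)) /= big_distrr /=.
  by apply: eq_bigr => s _; rewrite muln1.
move: H; rewrite card_V; case: g j0 => [[]//|g' j0] /=.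
by rewrite expnS => /eqP; rewrite eqn_mul2l /= => /eqP.
Qed.

Lemma nonzero_coord (y : V) : y != 0 -> exists j0, y j0 = 1.
Proof.
move=> Hy; have : ~~ [forall j, y j == 0].
  by apply: contra Hy => /forallP H; apply/eqP/ffunP => j; rewrite ffunE; apply/eqP.
by case/forallPn => j0 /F2_neq0 Hj; exists j0.
Qed.

End Pair.

Lemma eq2_4 x n : (2 * x == 4 * n)%N = (x == 2 * n)%N.
Proof. by rewrite (_ : 4 * n = 2 * (2 * n))%N ?eqn_mul2l // mulnA. Qed.

Lemma GF_Sw (I : finType) D c (w : I -> algC) :
  (\prod_(i : I) Sw D (w i))`_c =
  \sum_(f : {ffun I -> 'I_D.+1} | (\sum_i (f i : nat) == c)%N) \prod_i w i ^+ f i.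
Proof.
rewrite /Sw (GF D 1 c (fun i j => w i ^+ j)); apply: eq_bigl => f.
by rewrite mul1n.
Qed.

Lemma SwSw D (w : algC) : w = 1 \/ w = -1 -> Sw D w * Sw D (- w) = Sw D (-1) * Sw D 1.
Proof. by case=> ->; rewrite ?opprK // mulrC. Qed.

Section Count.
Variables g n : nat.
Local Notation d := (4 * n)%N.
Local Notation V := (F2vec g).
Local Notation F := {ffun V -> 'I_d.+1}.

Definition T (y u : V) : algC := \sum_(f : F | (degf f == d) && (tr y f == f)) chi u f.

Lemma coefQ2h k : ((Q2 d) ^+ k.+1)`_d = ('C(k + 2 * n, 2 * n))%:R.
Proof.
rewrite -(card_ord k.+1) -prodr_const.
have := GF d 2 d (fun (_ : 'I_k.+1) (_ : nat) => (1 : algC)); rewrite /= -/(Q2 d) => ->.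
have := GF d 1 (2 * n) (fun (_ : 'I_k.+1) (j : nat) => (1 : algC) ^+ j); rewrite /= -/(Sw d 1).
rewrite Sw1 prodr_const card_ord coef_Sp_exp; last by rewrite leq_mul.
move=> ->; apply: eq_big => [f|f _]; last by apply: eq_bigr => i _; rewrite expr1n.
by rewrite mul1n eq2_4.
Qed.

Lemma chi0 (f : F) : chi 0 f = 1.
Proof. by rewrite /chi big1 // => s _; rewrite dot0r sgnF2_0 expr1n. Qed.

Lemma pow2_pos k : (2 ^ k)%N = (2 ^ k - 1).+1.
Proof. by rewrite subn1 prednK // expn_gt0. Qed.

Lemma T00 : T 0 0 = ('C(2 ^ g + 4 * n - 1, 4 * n))%:R.
Proof.
rewrite /T (eq_bigr (fun _ => 1)); last by move=> f _; rewrite chi0.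
rewrite (eq_bigl (fun f : F => (1 * \sum_i (f i : nat) == d)%N)); last first.
  by move=> f; rewrite tr0 eqxx andbT mul1n.
have := GF d 1 d (fun (_ : V) (j : nat) => (1 : algC) ^+ j); rewrite /= -/(Sw d 1).
rewrite Sw1 prodr_const card_V [(2 ^ g)%N in X in (_ ^+ X)]pow2_pos coef_Sp_exp // => Hc.
rewrite (eq_bigr (fun f : F => \prod_(i : V) (1 : algC) ^+ f i)); last first.
  by move=> f _; rewrite big1 // => i _; rewrite expr1n.
by rewrite -Hc addnBAC // expn_gt0.
Qed.

Lemma T0u u : u != 0 -> T 0 u = ('C(2 ^ (g - 1) + 2 * n - 1, 2 * n))%:R.
Proof.
move=> Hu; have [j0 Hj0] := nonzero_coord Hu.
rewrite /T (eq_bigl (fun f : F => (\sum_i (f i : nat) == d)%N)); last first.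
  by move=> f; rewrite tr0 eqxx andbT.
rewrite /chi -(GF_Sw d d (fun s : V => sgnF2 (dotF2 s u))).
rewrite (pair_big _ _ (ev_j0 j0)) /=.
rewrite (eq_bigr (fun _ => Sw d (-1) * Sw d 1)); last first.
  move=> s _; rewrite dotDl dot_ev Hj0 sgnF2D sgnF2_1 mulN1r; apply: SwSw; exact: sgnF2_pm.
rewrite (eq_bigl (fun s => s \in [pred s : V | s j0 == 0%R])) // prodr_const card_half.
rewrite (coef_eq_exp (q := Q2 d) (e := d)) //; last by move=> j Hj; rewrite coef_SS // coef_Q2.
rewrite [(2 ^ g.-1)%N in X in (_ ^+ X)]pow2_pos coefQ2h -subn1.
by rewrite addnBAC // expn_gt0.
Qed.

End Count.

Section TFix.
Variables g n : nat.
Local Notation d := (4 * n)%N.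
Local Notation V := (F2vec g).
Local Notation F := {ffun V -> 'I_d.+1}.
Variables (y : V) (j0 : 'I_g).
Hypothesis Hy : y j0 = 1.

Lemma yplus (s : V) : ((y + s) j0 == 0) = (s j0 != 0).
Proof. by rewrite ffunE Hy F2_1add. Qed.

Lemma chi_fix u (f : F) : tr y f = f -> degf f = d -> chi u f = 1.
Proof.
move=> Hf Hd.
have Hsum : degf f = (2 * \sum_(s : V | s j0 == 0%R) (f s : nat))%N.
  rewrite /degf (pair_big _ _ Hy) /= big_distrr /=; apply: eq_bigr => s _.
  by rewrite -trE Hf mul2n addnn.
rewrite /chi (pair_big _ _ Hy) /=.
rewrite (eq_bigr (fun s => sgnF2 (dotF2 y u) ^+ f s)); last first.
  move=> s _; rewrite -trE Hf dotDl sgnF2D exprMn mulrCA -exprMn sgnF2_sq expr1n mulr1.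
  by [].
rewrite prodrXr sgn_even //.
have : (2 * \sum_(s : V | s j0 == 0%R) (f s : nat) == 4 * n)%N by rewrite -Hsum Hd.
by rewrite eq2_4 => /eqP ->; rewrite oddM.
Qed.

Definition ext (h : F) : F := [ffun s : V => if s j0 == 0 then h s else h (y + s)].
Definition restr (f : F) : F := [ffun s : V => if s j0 == 0 then f s else ord0].
Definition zo (h : F) : bool := [forall s : V, (s j0 == 0) || (h s == ord0)].
Definition Wf (s : V) (j : nat) : algC := if s j0 == 0 then 1 else (j == 0)%:R.

Lemma ext_restr (f : F) : tr y f = f -> ext (restr f) = f.
Proof.
move=> Hf; apply/ffunP => s; rewrite !ffunE; case: ifP => Hs; first by rewrite ?ffunE Hs.
by rewrite Hy F2_1add Hs -trE Hf.
Qed.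

Lemma restr_ext (h : F) : (restr (ext h) == h) = zo h.
Proof.
apply/eqP/forallP => [E s|H].
  have := congr1 (fun k : F => k s) E; rewrite !ffunE /=; case: ifP => Hs //= <-.
  by rewrite eqxx.
apply/ffunP => s; rewrite !ffunE; case: ifP => Hs; rewrite ?Hs //.
by move: (H s); rewrite Hs => /eqP ->.
Qed.

Lemma tr_ext (h : F) : tr y (ext h) = ext h.
Proof.
apply/ffunP => s; rewrite !ffunE Hy F2_1add.
by case: (s j0 == 0) => /=; rewrite ?addrA ?vaddxx ?add0r.
Qed.

Lemma degf_ext (h : F) : degf (ext h) = (2 * \sum_(s : V | s j0 == 0%R) (h s : nat))%N.
Proof.
rewrite /degf (pair_big _ _ Hy) /= big_distrr /=; apply: eq_big => // s Hs.
by rewrite !ffunE Hs Hy F2_1add Hs /= addrA vaddxx add0r mul2n addnn.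
Qed.

Lemma degf_zo (h : F) : zo h -> degf h = (\sum_(s : V | s j0 == 0%R) (h s : nat))%N.
Proof.
move=> /forallP Hz; rewrite /degf (bigID (fun s : V => s j0 == 0)) /= [X in (_ + X)%N]big1 ?addn0 //.
by move=> s /negbTE Hs; move: (Hz s); rewrite Hs /= => /eqP ->.
Qed.

Lemma Wf_prod (h : F) : \prod_(s : V) Wf s (h s) = (zo h)%:R.
Proof.
case: (boolP (zo h)) => Hz.
  rewrite big1 // => s _; rewrite /Wf; case: ifP => // Hs.
  by move/forallP: Hz => /(_ s); rewrite Hs /= => /eqP ->.
move/forallPn: Hz => [s]; rewrite negb_or => /andP[Hs Hh].
by rewrite (bigD1 s) //= /Wf (negbTE Hs) (negbTE Hh : ((h s : nat) == 0%N) = false) mul0r.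
Qed.

Lemma Tfix u : @T g n y u = ('C(2 ^ (g - 1) + 2 * n - 1, 2 * n))%:R.
Proof.
rewrite /T (eq_bigr (fun _ => 1)); last by move=> f /andP[/eqP Hd /eqP Hf]; exact: chi_fix.
rewrite (reindex_onto ext restr); last by move=> f /andP[_ /eqP Hf]; exact: ext_restr.
rewrite (eq_bigl (fun h : F => (2 * degf h == d)%N && zo h)); last first.
  move=> h; rewrite restr_ext tr_ext eqxx andbT.
  case: (boolP (zo h)) => Hz; rewrite ?andbF ?andbT // degf_ext degf_zo //.
rewrite big_mkcondr /=.
rewrite (eq_bigr (fun h : F => \prod_(s : V) Wf s (h s))); last first.
  by move=> h _; rewrite Wf_prod; case: (zo h).
rewrite /degf -(GF d 2 d Wf).
rewrite (bigID (fun s : V => s j0 == 0)) /=.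
rewrite [X in _ * X]big1 ?mulr1; last first.
  move=> s /negbTE Hs; rewrite /Wf Hs big_ord_recl /= big1 ?addr0.
    by rewrite muln0 expr0 scale1r.
  by move=> j _; rewrite scale0r.
rewrite (eq_bigr (fun _ => Q2 d)); last by move=> s Hs; rewrite /Wf Hs.
rewrite (eq_bigl (fun s => s \in [pred s : V | s j0 == 0%R])) // prodr_const card_half.
rewrite [(2 ^ g.-1)%N in X in (_ ^+ X)]pow2_pos coefQ2h -subn1.
by rewrite addnBAC // expn_gt0.
Qed.

End TFix.

Section Final.
Variables g n : nat.
Local Notation d := (4 * n)%N.
Local Notation V := (F2vec g).
Local Notation F := {ffun V -> 'I_d.+1}.

Lemma burnside : (#|V| * size (Rseq g n))%N =
  (\sum_(y : V) \sum_(f : F | (degf f == d) && bal f) (tr y f == f))%N.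
Proof.
rewrite exchange_big /=.
rewrite (partition_big (@rep g d) (fun r => r \in @Rset g n)); last first.
  by move=> f /andP[/eqP Hd Hb]; apply: Rset_rep.
rewrite (eq_bigr (fun _ => #|V|)); last first.
  move=> r Hr; rewrite big_mkcond /= -(orbc_sum r); apply: eq_bigr => f _.
  case: (boolP (rep f == r)) => [/eqP E|E]; last by rewrite andbF orbc0 // Rset_min.
  have [z Ez] := rep_orb f; rewrite E in Ez; subst f.
  rewrite degf_tr (Rset_deg Hr) eqxx bal_tr ?(Rset_deg Hr) ?oddM // (Rset_bal Hr) /=.
  by rewrite orbc_tr -(stab_tr z r).
by rewrite sum_nat_const mulnC cardE.
Qed.

Lemma charcount (y : V) :
  ((\sum_(f : F | (degf f == d) && bal f) (tr y f == f))%:R * (#|V|%:R) : algC)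
  = \sum_(u : V) T n y u.
Proof.
rewrite /T exchange_big /= natr_sum mulr_suml.
rewrite big_mkcond [RHS]big_mkcond; apply: eq_bigr => f _.
rewrite chi_sum.
by case: (degf f == d); case: (bal f); case: (tr y f == f); rewrite /= ?mul1r ?mul0r.
Qed.

End Final.

From mathcomp Require Import zify.

Lemma sumT (g n : nat) : (1 <= g)%N ->
  \sum_(y : F2vec g) \sum_(u : F2vec g) @T g n y u =
  ('C(2 ^ g + 4 * n - 1, 4 * n))%:R +
  ((#|F2vec g| - 1) + (#|F2vec g| - 1) * #|F2vec g|)%:R * ('C(2 ^ (g - 1) + 2 * n - 1, 2 * n))%:R.
Proof.
move=> hg; set Cp := ('C(2 ^ (g - 1) + 2 * n - 1, 2 * n))%:R.
rewrite (bigD1 (0 : F2vec g)) //= (bigD1 (0 : F2vec g)) //= T00.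
rewrite (eq_bigr (fun _ => Cp)); last by move=> u Hu; rewrite T0u.
rewrite [X in _ + X](eq_bigr (fun _ => \sum_(u : F2vec g) Cp)); last first.
  move=> y Hy; apply: eq_bigr => u _; have [j0 Hj0] := nonzero_coord Hy.
  exact: (Tfix n Hj0).
rewrite (eq_bigl (fun u => u \in predC1 0)) // sumr_const cardC1.
rewrite (eq_bigl (fun u => u \in predC1 0)) // sumr_const cardC1 sumr_const.
rewrite -addrA natrD mulrDl; congr (_ + _); rewrite mulr_natl; congr (_ + _).
  by rewrite subn1.
by rewrite -mulrnA mulr_natl subn1 mulnC.
Qed.

Local Close Scope ring_scope.

Theorem mainTheorem1 (g n : nat) (hg : (1 <= g)%N) (hn : (1 <= n)%N) :
  exists N : nat,
    has_dim (@inv_hom g (4 * n)) N /\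
    (2 ^ (2 * g) * N =
       'C(2 ^ g + 4 * n - 1, 4 * n)
       + (2 ^ (2 * g) - 1) * 'C(2 ^ (g - 1) + 2 * n - 1, 2 * n))%N.
Proof.
exists (size (Rseq g n)); split; first exact: has_dim_R.
set N := size (Rseq g n).
have H1 : (((#|F2vec g| * (#|F2vec g| * N))%:R : algC) = \sum_y \sum_u @T g n y u)%R.
  rewrite natrM burnside natr_sum mulr_sumr; apply: eq_bigr => y _.
  by rewrite mulrC charcount.
rewrite sumT // -natrM -natrD in H1; move/eqP: H1; rewrite eqr_nat => /eqP H1.
rewrite card_V in H1.
have -> : (2 ^ (2 * g) = 2 ^ g * 2 ^ g)%N by rewrite -expnD addnn -mul2n.
have Hv : (1 <= 2 ^ g)%N by rewrite expn_gt0.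
move: H1 Hv; set v := (2 ^ g)%N; set C := 'C(_, _); set Cp := 'C(_, _).
move=> H1 Hv; nia.
Qed.
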